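(* In the standing setup, the function $L\mapsto\gamma_L\tau_L$ on $\mathcal{V}$ satisfies $|D|(\gamma\tau)(L)\le6\gamma_L^2\tau_L^2$ at every $L\in\mathcal{V}$.
   Context: Standing setup: $\mathcal{X}$ is a real or complex Banach space; $L_0\in\mathcal{B}(\mathcal{X})$ has a simple isolated eigenvalue $\lambda_0$ (there are $u\ne0$ with $L_0u=\lambda_0u$ and a closed $L_0$-invariant complement $G$ of $\langle u\rangle$ with $(L_0-\lambda_0)|_G$ boundedly invertible). $\mathcal{V}$ is an open neighborhood of $L_0$ on which there are analytic maps $\lambda,u,\phi$ with $\lambda_{L_0}=\lambda_0$, $\lambda_L$ a simple isolated eigenvalue of $L$ with eigenvector $u_L$ and eigenform $\phi_L$ ($\phi_L\circ L=\lambda_L\phi_L$), $\phi_L(u_L)=1$. $P_L=\phi_L(\cdot)u_L$, $\pi_L=\mathrm{Id}-P_L$, $S_L=(L-\lambda_L)|_{\ker\phi_L}^{-1}\pi_L$, $\tau_L=\|P_L\|$ (note $\tau_L\ge1$), $\gamma_L=\|S_L\|$. The metric derivative of a real function $f$ is $|D|f(x)=\limsup_{r\to0}\sup_{y\in B(x,r)}|f(x)-f(y)|/\|x-y\|$. *)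

(* Defs.v *)
From HB Require Import structures.
From mathcomp Require Import all_boot all_order all_algebra.
From mathcomp Require Import complex.
From mathcomp Require Import all_classical all_reals all_analysis.
Set Implicit Arguments. Unset Strict Implicit. Unset Printing Implicit Defensive.
Import Order.TTheory GRing.Theory Num.Theory.
Local Open Scope ring_scope.
Local Open Scope classical_set_scope.

(* The scalar field: R (b = false, real Banach spaces) or R[i] (b = true,
   complex Banach spaces). *)
Definition scal (R : realType) (b : bool) : numFieldType :=
  if b then (R[i] : numFieldType) else (R : numFieldType).

(* Norm values live in the scalar field; this maps them back to R
   (for R[i], the real part; norms are real and nonnegative). *)
Definition toR (R : realType) (b : bool) : scal R b -> R :=
  match b return scal R b -> R with
  | true => fun z => complex.Re z
  | false => fun x => x
  end.

Section Defs.
Variables (R : realType) (b : bool) (X : completeNormedModType (scal R b)).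
Local Notation K := (scal R b).

Definition nX (x : X) : R := toR `|x|.
Definition nK (a : K) : R := toR `|a|.

Definition is_linear_map (Y : Type) (addY : Y -> Y -> Y) (scaleY : K -> Y -> Y)
  (T : X -> Y) := forall (a : K) (x y : X), T (a *: x + y) = addY (scaleY a (T x)) (T y).

Definition bounded_op (T : X -> X) :=
  is_linear_map +%R *:%R T /\ exists C : R, forall x, nX (T x) <= C * nX x.

Definition bounded_form (f : X -> K) :=
  is_linear_map +%R *%R f /\ exists C : R, forall x, nK (f x) <= C * nX x.

Definition opnorm (T : X -> X) : R := sup [set nX (T x) | x in [set x | nX x <= 1]].
Definition formnorm (f : X -> K) : R := sup [set nK (f x) | x in [set x | nX x <= 1]].

Definition opsub (T T' : X -> X) : X -> X := fun x => T x - T' x.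

Definition open_in_BX (V : set (X -> X)) :=
  forall L, V L -> bounded_op L /\
    exists r : R, 0 < r /\
      forall L', bounded_op L' -> opnorm (opsub L' L) < r -> V L'.

(* Simple isolated eigenvalue, as in the standing setup: an eigenvector u <> 0
   and a closed L-invariant complement G of <u> on which (L - l) is boundedly
   invertible. *)
Definition simple_isolated_eigenvalue (L : X -> X) (l : K) :=
  exists u : X, u != 0 /\ L u = l *: u /\
  exists G : set X,
    [/\ G 0, (forall (a : K) x y, G x -> G y -> G (a *: x + y)),
        closed G & (forall x, G x -> G (L x))] /\
    (forall x, exists p : K * X, G p.2 /\ x = p.1 *: u + p.2) /\
    (forall (a : K) g, G g -> a *: u + g = 0 -> a = 0) /\
    (forall y, G y -> exists x, G x /\ L x - l *: x = y) /\
    (exists C : R, forall x, G x -> nX x <= C * nX (L x - l *: x)).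

(* Analyticity on an open set V of B(X) of a map into a normed space Y
   (given by addition, scaling and real norm nY): near each point L of V
   f(L + H) = sum_k A_k(H,...,H), A_k bounded k-linear with
   ||A_k(h_0..h_{k-1})|| <= C_k prod ||h_i|| and sum_k C_k r^k < oo. *)
Definition upd (h : nat -> X -> X) (i : nat) (v : X -> X) : nat -> X -> X :=
  fun j => if j == i then v else h j.

Definition opadd (T T' : X -> X) : X -> X := fun x => T x + T' x.
Definition opscale (a : K) (T : X -> X) : X -> X := fun x => a *: T x.

Definition analytic_on (Y : Type) (zeroY : Y) (addY : Y -> Y -> Y)
  (scaleY : K -> Y -> Y) (nY : Y -> R)
  (V : set (X -> X)) (f : (X -> X) -> Y) :=
  forall L, V L ->
  exists (r : R) (A : nat -> (nat -> X -> X) -> Y) (C : nat -> R),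
  0 < r /\
  [/\
      (forall k h h', (forall i, (i < k)%N -> h i = h' i) -> A k h = A k h'),
      (forall k i h (a : K) v w, (i < k)%N ->
         (forall j, bounded_op (h j)) -> bounded_op v -> bounded_op w ->
         A k (upd h i (opadd (opscale a v) w)) =
           addY (scaleY a (A k (upd h i v))) (A k (upd h i w))),
      (forall k h, (forall j, bounded_op (h j)) ->
         0 <= C k /\ nY (A k h) <= C k * \prod_(i < k) opnorm (h i)),
      (exists M : R, forall n, \sum_(k < n) C k * r ^+ k <= M) &
      (forall H, bounded_op H -> opnorm H < r ->
         forall eps : R, 0 < eps -> exists N : nat, forall n, (N <= n)%N ->
           nY (addY (f (opadd L H))
                    (scaleY (-1) (\big[addY/zeroY]_(k < n) A k (fun _ => H))))
             < eps)].

Definition P_of (u : X) (phi : X -> K) : X -> X := fun x => phi x *: u.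
Definition pi_of (u : X) (phi : X -> K) : X -> X := fun x => x - phi x *: u.
(* S_L = (L - lam)|_{ker phi}^{-1} pi_L : S_L x is the y in ker phi with
   (L - lam) y = pi_L x (unique under the standing assumptions). *)
Definition S_of (L : X -> X) (lam : K) (u : X) (phi : X -> K) : X -> X :=
  fun x => xget 0 [set y | phi y = 0 /\ L y - lam *: y = pi_of u phi x].

(* Metric derivative |D|f(x) = limsup_{r -> 0} sup_{y in B(x,r)} |f x - f y|/||x-y||,
   on B(X) with the operator norm; y = x is excluded from the sup (0/0), and the
   limsup of the nonincreasing family r |-> sup_{B(x,r)} is its infimum over r > 0. *)
Definition metric_deriv (f : (X -> X) -> R) (L : X -> X) : \bar R :=
  ereal_inf [set ereal_sup [set (`|f L - f L'| / opnorm (opsub L L'))%:E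
                             | L' in [set L' | bounded_op L' /\
                                  0 < opnorm (opsub L L') < r]]
            | r in [set r : R | 0 < r]].

End Defs.

(* Main.v *)
Require Import Defs.
From HB Require Import structures.
From mathcomp Require Import all_boot all_order all_algebra.
From mathcomp Require Import complex.
From mathcomp Require Import all_classical all_reals all_analysis.
From mathcomp Require Import ring lra.
Import Order.TTheory GRing.Theory Num.Theory.
Local Open Scope ring_scope.
Local Open Scope classical_set_scope.
Set Implicit Arguments. Unset Strict Implicit. Unset Printing Implicit Defensive.

Lemma ABCD (V : zmodType) (a b c d : V) : (a - b) - (c - d) = (a - c) - (b - d).
Proof. rewrite !opprB addrACA [RHS]addrACA; congr (_ + _); exact: addrC. Qed.
Lemma ABCDp (V : zmodType) (a b c d : V) : (a + b) - (c + d) = (a - c) + (b - d).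
Proof. by rewrite opprD addrACA. Qed.
Lemma linpi (K : pzRingType) (V : lmodType K) (a p q : K) (x y u : V) :
  a *: (x - p *: u) + (y - q *: u) = a *: x + y - (a * p + q) *: u.
Proof. by rewrite scalerBr scalerA scalerDl opprD addrACA. Qed.
Lemma zm1 (V : zmodType) (a b c d : V) : a - b = (c - d) + ((a - c) - (b - d)).
Proof. by rewrite ABCD [RHS]addrC subrK. Qed.
Lemma zm4 (V : zmodType) (p s q f : V) : (p + ((s - q) - f)) - s = - f + p - q.
Proof.
rewrite -addrA [(s - q - f) - s]addrAC [s - q - s]addrAC subrr add0r.
by rewrite [-f + p]addrC addrAC addrA.
Qed.

Lemma toRD (R : realType) b (x y : scal R b) : toR (x + y) = toR x + toR y.
Proof. by destruct b => //=; case: x => ? ?; case: y. Qed.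
Lemma toR0 (R : realType) b : toR (0 : scal R b) = 0.
Proof. by case: b. Qed.
Lemma toR1 (R : realType) b : toR (1 : scal R b) = 1.
Proof. by case: b. Qed.
Lemma toRN (R : realType) b (x : scal R b) : toR (- x) = - toR x.
Proof. by destruct b => //=; case: x. Qed.
Lemma toR_le (R : realType) b (x y : scal R b) : x <= y -> toR x <= toR y.
Proof. destruct b => //=. rewrite lecE => /andP[_ ->] //. Qed.
Lemma toR_ge0 (R : realType) b (x : scal R b) : 0 <= x -> 0 <= toR x.
Proof. by move=> h; rewrite -(toR0 R b); apply: toR_le. Qed.
Lemma toRM (R : realType) b (x y : scal R b) : 0 <= x -> 0 <= y -> toR (x * y) = toR x * toR y.
Proof.
destruct b => //= hx hy.
have h1 := ger0_Im hx; have h2 := ger0_Im hy.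
by move: h1 h2; case: x {hx} => ? ?; case: y {hy} => ? ? /= -> ->; rewrite mulr0 subr0.
Qed.
Lemma toR_eq0 (R : realType) b (x : scal R b) : 0 <= x -> toR x = 0 -> x = 0.
Proof.
destruct b => //= hx h; have := ger0_Im hx; move: h; case: x {hx} => ? ? /= -> -> //.
Qed.

Definition ofR (R : realType) b (r : R) : scal R b :=
  match b return scal R b with true => ((r%:C)%C : R[i]) | false => r end.

Lemma toR_ofR (R : realType) b (r : R) : toR (ofR b r) = r.
Proof. by case: b. Qed.
Lemma ofR_ge0 (R : realType) b (r : R) : 0 <= r -> 0 <= ofR b r.
Proof. by case: b => //= h; rewrite lecR. Qed.
Lemma ofRM (R : realType) b (r s : R) : ofR b (r * s) = ofR b r * ofR b s.
Proof. by case: b => //=; rewrite rmorphM. Qed.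
Lemma ofR1 (R : realType) b : ofR b (1 : R) = 1.
Proof. by case: b. Qed.

Section Norms.
Variables (R : realType) (b : bool) (X : completeNormedModType (scal R b)).
Local Notation K := (scal R b).
Local Notation nX := (@nX R b X).
Local Notation nK := (@nK R b).

Lemma nX_ge0 (x : X) : 0 <= nX x.
Proof. exact/toR_ge0/normr_ge0. Qed.
Lemma nK_ge0 (a : K) : 0 <= nK a.
Proof. exact/toR_ge0/normr_ge0. Qed.
Lemma nXD (x y : X) : nX (x + y) <= nX x + nX y.
Proof. by rewrite /Defs.nX -toRD; apply/toR_le/ler_normD. Qed.
Lemma nKD (x y : K) : nK (x + y) <= nK x + nK y.
Proof. by rewrite /Defs.nK -toRD; apply/toR_le/ler_normD. Qed.
Lemma nXZ (a : K) (x : X) : nX (a *: x) = nK a * nX x.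
Proof. by rewrite /Defs.nX normrZ toRM. Qed.
Lemma nKM (a c : K) : nK (a * c) = nK a * nK c.
Proof. by rewrite /Defs.nK normrM toRM. Qed.
Lemma nXN (x : X) : nX (- x) = nX x.
Proof. by rewrite /Defs.nX normrN. Qed.
Lemma nKN (x : K) : nK (- x) = nK x.
Proof. by rewrite /Defs.nK normrN. Qed.
Lemma nX0 : nX 0 = 0.
Proof. by rewrite /Defs.nX normr0 toR0. Qed.
Lemma nK0 : nK 0 = 0.
Proof. by rewrite /Defs.nK normr0 toR0. Qed.
Lemma nK1 : nK 1 = 1.
Proof. by rewrite /Defs.nK normr1 toR1. Qed.
Lemma nX_eq0 (x : X) : nX x = 0 -> x = 0.
Proof. by move/toR_eq0 => /(_ (normr_ge0 _)) /normr0_eq0. Qed.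
Lemma nK_eq0 (x : K) : nK x = 0 -> x = 0.
Proof. by move/toR_eq0 => /(_ (normr_ge0 _)) /normr0_eq0. Qed.
Lemma nK_ofR (r : R) : 0 <= r -> nK (ofR b r) = r.
Proof. by move=> h; rewrite /Defs.nK ger0_norm ?toR_ofR // ofR_ge0. Qed.
Lemma nXB (x y : X) : nX (x - y) = nX (y - x).
Proof. by rewrite -nXN opprB. Qed.
Lemma nXBle (x y : X) : nX x - nX y <= nX (x - y).
Proof. have := nXD (x - y) y; rewrite subrK; lra. Qed.
Definition supb (g : X -> R) : R := sup [set g x | x in [set x | nX x <= 1]].

Lemma supb_le (g : X -> R) (c : R) : 0 <= c ->
  (forall x, g x <= c * nX x) -> supb g <= c.
Proof.
move=> c0 hg; apply: ge_sup; first by exists (g 0), 0 => //=; rewrite nX0.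
move=> _ [x hx <-]; apply: le_trans (hg x) _.
by rewrite -[leRHS]mulr1 ler_wpM2l.
Qed.

Lemma supb_ub (g : X -> R) (C : R) :
  (forall (a : K) x, g (a *: x) = nK a * g x) -> (forall x, 0 <= g x) ->
  (forall x, g x <= C * nX x) -> forall x, g x <= supb g * nX x.
Proof.
move=> hom g0 hC x.
have hub : has_ubound [set g x | x in [set x | nX x <= 1]].
  exists `|C| => _ [y hy <-]; apply: le_trans (hC y) _.
  move: hy; rewrite /= => hy.
  have := nX_ge0 y; have := ler_norm C; have := normr_ge0 C; nra.
have [x0|xn0] := eqVneq (nX x) 0.
  rewrite x0 mulr0 (nX_eq0 x0) -(scale0r (0 : X)) hom nK0 mul0r //.
have xp : 0 < nX x by rewrite lt_neqAle eq_sym xn0 nX_ge0.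
set y := ofR b (nX x)^-1 *: x.
have ny : nX y = 1 by rewrite nXZ nK_ofR ?invr_ge0 ?nX_ge0 // mulVf.
have -> : x = ofR b (nX x) *: y.
  by rewrite /y scalerA -ofRM mulfV // ofR1 scale1r.
rewrite hom nXZ nK_ofR ?nX_ge0 // ny mulr1 mulrC ler_wpM2r ?nX_ge0 //.
by apply: ub_le_sup => //; exists y => //=; rewrite ny.
Qed.
End Norms.

Section Ops.
Variables (R : realType) (b : bool) (X : completeNormedModType (scal R b)).
Local Notation K := (scal R b).
Local Notation nX := (@nX R b X).
Local Notation nK := (@nK R b).
Definition lin (T : X -> X) := is_linear_map +%R *:%R T.
Definition linf (f : X -> K) := is_linear_map +%R *%R f.

Lemma lin0 (T : X -> X) : lin T -> T 0 = 0.
Proof. by move=> h; have := h 1 0 0; rewrite !scale1r addr0 => /(congr1 (fun v => v - T 0)); rewrite addrK subrr => <-. Qed.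
Lemma linD (T : X -> X) : lin T -> forall x y, T (x + y) = T x + T y.
Proof. by move=> h x y; have := h 1 x y; rewrite !scale1r. Qed.
Lemma linZ (T : X -> X) : lin T -> forall a x, T (a *: x) = a *: T x.
Proof. by move=> h a x; have := h a x 0; rewrite !addr0 lin0 // addr0. Qed.
Lemma linN (T : X -> X) : lin T -> forall x, T (- x) = - T x.
Proof. by move=> h x; rewrite -scaleN1r linZ // scaleN1r. Qed.
Lemma linB (T : X -> X) : lin T -> forall x y, T (x - y) = T x - T y.
Proof. by move=> h x y; rewrite linD // linN. Qed.

Lemma linf0 (f : X -> K) : linf f -> f 0 = 0.
Proof. by move=> h; have := h 1 0 0; rewrite !scale1r addr0 mul1r => /(congr1 (fun v => v - f 0)); rewrite addrK subrr => <-. Qed.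
Lemma linfD (f : X -> K) : linf f -> forall x y, f (x + y) = f x + f y.
Proof. by move=> h x y; have := h 1 x y; rewrite !scale1r mul1r. Qed.
Lemma linfZ (f : X -> K) : linf f -> forall a x, f (a *: x) = a * f x.
Proof. by move=> h a x; have := h a x 0; rewrite !addr0 linf0 // addr0. Qed.
Lemma linfN (f : X -> K) : linf f -> forall x, f (- x) = - f x.
Proof. by move=> h x; rewrite -scaleN1r linfZ // mulN1r. Qed.
Lemma linfB (f : X -> K) : linf f -> forall x y, f (x - y) = f x - f y.
Proof. by move=> h x y; rewrite linfD // linfN. Qed.

Lemma opnorm_supb (T : X -> X) : opnorm T = supb (fun x => nX (T x)).
Proof. by []. Qed.
Lemma formnorm_supb (f : X -> K) : formnorm f = supb (fun x => nK (f x)).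
Proof. by []. Qed.

Lemma op_bnd (T : X -> X) : bounded_op T -> forall x, nX (T x) <= opnorm T * nX x.
Proof.
move=> [hl [C hC]]; rewrite opnorm_supb; apply: supb_ub hC.
- by move=> a x; rewrite linZ // nXZ.
- by move=> x; apply: nX_ge0.
Qed.
Lemma form_bnd (f : X -> K) : bounded_form f -> forall x, nK (f x) <= formnorm f * nX x.
Proof.
move=> [hl [C hC]]; rewrite formnorm_supb; apply: supb_ub hC.
- by move=> a x; rewrite linfZ // nKM.
- by move=> x; apply: nK_ge0.
Qed.
Lemma opnorm_le (T : X -> X) c : 0 <= c -> (forall x, nX (T x) <= c * nX x) -> opnorm T <= c.
Proof. by move=> c0 h; rewrite opnorm_supb; apply: supb_le. Qed.
Lemma formnorm_le (f : X -> K) c : 0 <= c -> (forall x, nK (f x) <= c * nX x) -> formnorm f <= c.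
Proof. by move=> c0 h; rewrite formnorm_supb; apply: supb_le. Qed.

Lemma opnorm_ge0 (T : X -> X) : bounded_op T -> 0 <= opnorm T.
Proof.
move=> [hl [C hC]]; rewrite opnorm_supb /supb.
apply: le_trans (nX_ge0 (T 0)) _; apply: ub_le_sup.
  exists `|C| => _ [y hy <-]; apply: le_trans (hC y) _.
  move: hy; rewrite /= => hy.
  have := nX_ge0 y; have := ler_norm C; have := normr_ge0 C; nra.
by exists 0 => //=; rewrite nX0 ler01.
Qed.
Lemma formnorm_ge0 (f : X -> K) : bounded_form f -> 0 <= formnorm f.
Proof.
move=> [hl [C hC]]; rewrite formnorm_supb /supb.
apply: le_trans (nK_ge0 (f 0)) _; apply: ub_le_sup.
  exists `|C| => _ [y hy <-]; apply: le_trans (hC y) _.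
  move: hy; rewrite /= => hy.
  have := nX_ge0 y; have := ler_norm C; have := normr_ge0 C; nra.
by exists 0 => //=; rewrite nX0 ler01.
Qed.

Lemma bounded_opP (T : X -> X) : lin T -> (exists C, forall x, nX (T x) <= C * nX x) -> bounded_op T.
Proof. by move=> *; split. Qed.

Lemma lin_sub (T T' : X -> X) : lin T -> lin T' -> lin (fun x => T x - T' x).
Proof.
move=> hl hl' a x y; rewrite (linD hl) (linD hl') (linZ hl) (linZ hl').
by rewrite scalerBr; rewrite addrACA opprD.
Qed.
Lemma bounded_sub (T T' : X -> X) : bounded_op T -> bounded_op T' -> bounded_op (opsub T T').
Proof.
move=> [hl [C hC]] [hl' [C' hC']]; split.
  move=> a x y; rewrite /opsub (linD hl) (linD hl') (linZ hl) (linZ hl').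
  by rewrite scalerBr; rewrite addrACA opprD.
exists (C + C') => x; rewrite /opsub; apply: le_trans (nXD _ _) _.
rewrite nXN mulrDl; exact: lerD.
Qed.
Lemma bounded_add (T T' : X -> X) : bounded_op T -> bounded_op T' -> bounded_op (opadd T T').
Proof.
move=> [hl [C hC]] [hl' [C' hC']]; split.
  move=> a x y; rewrite /opadd (linD hl) (linD hl') (linZ hl) (linZ hl').
  by rewrite scalerDr addrACA.
exists (C + C') => x; rewrite /opadd; apply: le_trans (nXD _ _) _.
rewrite mulrDl; exact: lerD.
Qed.
Lemma bounded_zero : bounded_op (fun _ : X => 0).
Proof.
split; first by move=> a x y; rewrite scaler0 addr0.
by exists 0 => x; rewrite nX0 mul0r.
Qed.
Lemma opnorm_zero : opnorm (fun _ : X => 0) = 0.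
Proof.
apply/le_anti; apply/andP; split; last exact: opnorm_ge0 bounded_zero.
by apply: opnorm_le => // x; rewrite nX0 mul0r.
Qed.
Lemma opnorm_subC (T T' : X -> X) : opnorm (opsub T T') = opnorm (opsub T' T).
Proof.
rewrite !opnorm_supb; congr supb; apply/funext => x.
by rewrite /opsub -nXN opprB.
Qed.
Lemma op_bnd2 (T1 T2 : X -> X) : bounded_op T1 -> bounded_op T2 ->
  forall x, nX (T1 (T2 x)) <= opnorm T1 * opnorm T2 * nX x.
Proof.
move=> h1 h2 x; apply: le_trans (op_bnd h1 _) _.
by rewrite -mulrA ler_wpM2l ?opnorm_ge0 // op_bnd.
Qed.
Lemma op_bnd3 (T1 T2 T3 : X -> X) : bounded_op T1 -> bounded_op T2 -> bounded_op T3 ->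
  forall x, nX (T1 (T2 (T3 x))) <= opnorm T1 * opnorm T2 * opnorm T3 * nX x.
Proof.
move=> h1 h2 h3 x; apply: le_trans (op_bnd h1 _) _.
by rewrite -!mulrA ler_wpM2l ?opnorm_ge0 // mulrA op_bnd2.
Qed.
Lemma nX_tri4 (a c e f : X) (k : K) :
  nX (a - k *: c - (e - k *: f)) <= nX a + nK k * nX c + (nX e + nK k * nX f).
Proof.
apply: le_trans (nXD _ _) _; rewrite nXN; apply: lerD.
  by apply: le_trans (nXD _ _) _; rewrite nXN nXZ.
by apply: le_trans (nXD _ _) _; rewrite nXN nXZ.
Qed.
Lemma nX_tri4' (a c e f : X) (k : K) :
  nX (a - k *: c + (e - k *: f)) <= nX a + nK k * nX c + (nX e + nK k * nX f).
Proof.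
apply: le_trans (nXD _ _) _; apply: lerD.
  by apply: le_trans (nXD _ _) _; rewrite nXN nXZ.
by apply: le_trans (nXD _ _) _; rewrite nXN nXZ.
Qed.
Lemma op_bnd4 (T1 T2 T3 T4 : X -> X) : bounded_op T1 -> bounded_op T2 -> bounded_op T3 ->
  bounded_op T4 ->
  forall x, nX (T1 (T2 (T3 (T4 x)))) <= opnorm T1 * opnorm T2 * opnorm T3 * opnorm T4 * nX x.
Proof.
move=> h1 h2 h3 h4 x; apply: le_trans (op_bnd h1 _) _.
by rewrite -!mulrA ler_wpM2l ?opnorm_ge0 // !mulrA op_bnd3.
Qed.
Lemma nX_tri6 (a c e f p q : X) (k : K) :
  nX (- (a - k *: c) + (e - k *: f) + (p - k *: q)) <=
  nX a + nK k * nX c + (nX e + nK k * nX f) + (nX p + nK k * nX q).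
Proof.
apply: le_trans (nXD _ _) _; apply: lerD.
  apply: le_trans (nXD _ _) _; rewrite nXN; apply: lerD.
    by apply: le_trans (nXD _ _) _; rewrite nXN nXZ.
  by apply: le_trans (nXD _ _) _; rewrite nXN nXZ.
by apply: le_trans (nXD _ _) _; rewrite nXN nXZ.
Qed.
End Ops.

Section Spec.
Variables (R : realType) (b : bool) (X : completeNormedModType (scal R b)).
Local Notation K := (scal R b).
Local Notation nX := (@nX R b X).
Local Notation nK := (@nK R b).

Record spec (L : X -> X) (lam : K) (u : X) (phi : X -> K) (S : X -> X) : Prop := Spec {
 sp_L : bounded_op L;
 sp_phi : bounded_form phi;
 sp_u : L u = lam *: u;
 sp_phiu : phi u = 1;
 sp_phiL : forall x, phi (L x) = lam * phi x;
 sp_S : forall x, phi (S x) = 0 /\ L (S x) - lam *: S x = x - phi x *: u;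
 sp_uniq : forall y, phi y = 0 -> L y - lam *: y = 0 -> y = 0;
 sp_Sb : exists C, forall x, nX (S x) <= C * nX x }.

Lemma spec_of (L : X -> X) (lam : K) (u : X) (phi : X -> K) :
  bounded_op L -> simple_isolated_eigenvalue L lam ->
  L u = lam *: u -> bounded_form phi ->
  (forall x, phi (L x) = lam * phi x) -> phi u = 1 ->
  spec L lam u phi (S_of L lam u phi).
Proof.
move=> hL [u0 [u0n0 [Lu0 [G [[G0 Glin Gcl GL] [Gdec [Gdir [Gsurj [C hC]]]]]]]]] Lu hphi phiL phiu.
have lL := hL.1; have lphi := hphi.1.
have Gphi : forall g, G g -> phi g = 0.
  move=> g /Gsurj [h [Gh <-]].
  by rewrite (linfB lphi) (linfZ lphi) phiL subrr.
have nul : forall g, G g -> L g - lam *: g = 0 -> g = 0.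
  move=> g Gg h; have := hC g Gg; rewrite h nX0 mulr0 => h1.
  by apply: nX_eq0; apply/le_anti; rewrite h1 nX_ge0.
have [[c g] /= [Gg ug]] := Gdec u.
have g0 : g = 0.
  apply: nul => //.
  have : L u - lam *: u = 0 by rewrite Lu subrr.
  rewrite ug (linD lL) (linZ lL) Lu0 scalerA mulrC -scalerA scalerDr.
  by rewrite opprD addrACA subrr add0r.
have cphi : c * phi u0 = 1.
  by rewrite -phiu ug g0 addr0 (linfZ lphi).
have Gker : forall x, phi x = 0 -> G x.
  move=> x px; have [[c' g'] /= [Gg' xg']] := Gdec x.
  have c'0 : c' = 0.
    have : phi x = c' * phi u0 by rewrite xg' (linfD lphi) (linfZ lphi) (Gphi _ Gg') addr0.
    rewrite px => /esym /eqP; rewrite mulf_eq0 => /orP[/eqP //|/eqP h].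
    by move: cphi; rewrite h mulr0 => /eqP; rewrite eq_sym oner_eq0.
  by rewrite xg' c'0 scale0r add0r.
have hS : forall x, phi (S_of L lam u phi x) = 0 /\
     L (S_of L lam u phi x) - lam *: S_of L lam u phi x = x - phi x *: u.
  move=> x; have hx : exists y, phi y = 0 /\ L y - lam *: y = Defs.pi_of u phi x.
    have : G (x - phi x *: u).
      by apply: Gker; rewrite (linfB lphi) (linfZ lphi) phiu mulr1 subrr.
    by move=> /Gsurj [z [Gz hz]]; exists z; split => //; apply: Gphi.
  exact: (xgetPex 0 hx).
constructor => //.
- by move=> y py h; apply: nul => //; apply: Gker.
- have [F hF] := hphi.2.
  exists (`|C| * (1 + `|F| * nX u)) => x.
  have [p1 p2] := hS x.
  apply: le_trans (hC _ (Gker _ p1)) _; rewrite p2.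
  apply: le_trans (_ : `|C| * (nX x + `|F| * nX x * nX u) <= _); last first.
    by rewrite le_eqVlt; apply/orP; left; apply/eqP; ring.
  have hn := nX_ge0 (x - phi x *: u).
  apply: le_trans (_ : `|C| * nX (x - phi x *: u) <= _).
    by rewrite ler_wpM2r // ler_norm.
  rewrite ler_wpM2l //; apply: le_trans (nXD _ _) _; rewrite nXN nXZ lerD2l.
  rewrite ler_wpM2r ?nX_ge0 //; apply: le_trans (hF x) _.
  by rewrite ler_wpM2r ?nX_ge0 // ler_norm.
Qed.

Variables (L : X -> X) (lam : K) (u : X) (phi : X -> K) (S : X -> X).
Hypothesis sp : spec L lam u phi S.

Let lL := (sp_L sp).1.
Let lphi := (sp_phi sp).1.

Lemma sp_lin : is_linear_map +%R *:%R L.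
Proof. exact: lL. Qed.
Lemma sp_linf : is_linear_map +%R *%R phi.
Proof. exact: lphi. Qed.

Definition LL x := L x - lam *: x.
Definition PP x := phi x *: u.

Lemma LL_lin : is_linear_map +%R *:%R LL.
Proof.
move=> a x y; rewrite /LL (linD lL) (linZ lL) scalerDr scalerA mulrC -scalerA.
by rewrite ABCDp -scalerBr.
Qed.
Lemma PP_lin : is_linear_map +%R *:%R PP.
Proof. by move=> a x y; rewrite /PP (linfD lphi) (linfZ lphi) scalerDl scalerA. Qed.

Lemma S_char x y : phi y = 0 -> LL y = x - PP x -> S x = y.
Proof.
move=> h1 h2; have [p1 p2] := sp_S sp x.
apply/eqP; rewrite -subr_eq0; apply/eqP; apply: (sp_uniq sp).
  by rewrite (linfB lphi) p1 h1 subrr.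
by rewrite (linB lL) scalerBr ABCD p2 -/(LL y) h2 subrr.
Qed.

Lemma phiS x : phi (S x) = 0.
Proof. by have [] := sp_S sp x. Qed.
Lemma LLS x : LL (S x) = x - PP x.
Proof. by have [] := sp_S sp x. Qed.

Lemma S_lin : is_linear_map +%R *:%R S.
Proof.
move=> a x y; apply: S_char.
  by rewrite (linfD lphi) (linfZ lphi) !phiS mulr0 addr0.
rewrite LL_lin !LLS /PP linpi.
by rewrite (linfD lphi) (linfZ lphi).
Qed.

Lemma phiLL x : phi (LL x) = 0.
Proof. by rewrite /LL (linfB lphi) (linfZ lphi) (sp_phiL sp) subrr. Qed.
Lemma PLL x : PP (LL x) = 0.
Proof. by rewrite /PP phiLL scale0r. Qed.
Lemma LLu : LL u = 0.
Proof. by rewrite /LL (sp_u sp) subrr. Qed.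
Lemma LLP x : LL (PP x) = 0.
Proof. by rewrite /PP (linZ LL_lin) LLu scaler0. Qed.
Lemma S_LL x : S (LL x) = x - PP x.
Proof.
apply: S_char; first by rewrite (linfB lphi) /PP (linfZ lphi) (sp_phiu sp) mulr1 subrr.
by rewrite PLL subr0 (linB LL_lin) LLP subr0.
Qed.
Lemma Su a : S (a *: u) = 0.
Proof.
apply: S_char; first exact: (linf0 lphi).
by rewrite /LL (lin0 lL) scaler0 subr0 /PP (linfZ lphi) (sp_phiu sp) mulr1 subrr.
Qed.
Lemma SP x : S (PP x) = 0.
Proof. exact: Su. Qed.
Lemma PS x : PP (S x) = 0.
Proof. by rewrite /PP phiS scale0r. Qed.
Lemma PPP x : PP (PP x) = PP x.
Proof. by rewrite /PP (linfZ lphi) (sp_phiu sp) mulr1. Qed.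
Lemma SPinv y : S (LL y + PP y) + PP (LL y + PP y) = y.
Proof.
rewrite (linD S_lin) (linD PP_lin) S_LL SP PLL PPP addr0 add0r.
by rewrite subrK.
Qed.
Lemma phi_u_neq0 : u != 0.
Proof.
apply/eqP => h; have := sp_phiu sp; rewrite h (linf0 lphi) => /eqP.
by rewrite eq_sym oner_eq0.
Qed.
Lemma nXu_gt0 : 0 < nX u.
Proof.
rewrite lt_neqAle nX_ge0 andbT; apply/eqP => /esym /nX_eq0 h.
by move: phi_u_neq0; rewrite h eqxx.
Qed.
Lemma S_bounded : bounded_op S.
Proof. split; [exact: S_lin | exact: sp_Sb sp]. Qed.
Lemma P_bounded : bounded_op PP.
Proof.
split; first exact: PP_lin.
have [F hF] := (sp_phi sp).2; exists (F * nX u) => x.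
rewrite /PP nXZ mulrAC ler_wpM2r ?nX_ge0 //.
Qed.
Lemma PP_of : P_of u phi = PP.
Proof. by []. Qed.
Lemma tau_ge1 : 1 <= opnorm PP.
Proof.
have := op_bnd P_bounded u; rewrite {1}/PP (sp_phiu sp) scale1r.
rewrite -{1}[nX u]mul1r ler_pM2r //; exact: nXu_gt0.
Qed.
Lemma phi_bnd x : nK (phi x) * nX u <= opnorm PP * nX x.
Proof. by rewrite -nXZ; exact: op_bnd P_bounded x. Qed.
End Spec.

Section Pert.
Variables (R : realType) (b : bool) (X : completeNormedModType (scal R b)).
Local Notation K := (scal R b).
Local Notation nX := (@nX R b X).
Local Notation nK := (@nK R b).
Variables (L : X -> X) (lam : K) (u : X) (phi : X -> K) (S : X -> X).
Variables (L' : X -> X) (lam' : K) (u' : X) (phi' : X -> K) (S' : X -> X).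
Hypothesis sp : spec L lam u phi S.
Hypothesis sp' : spec L' lam' u' phi' S'.

Local Notation P := (PP u phi).
Local Notation P' := (PP u' phi').
Local Notation LL0 := (LL L lam).
Local Notation LL1 := (LL L' lam').
Let E x := L' x - L x.
Let dl := lam' - lam.
Let F x := E x - dl *: x.

Let lL := sp_lin sp.
Let lL' := sp_lin sp'.
Let lphi := sp_linf sp.
Let lphi' := sp_linf sp'.
Let lS := S_lin sp.
Let lS' := S_lin sp'.
Let lP := PP_lin sp.
Let lP' := PP_lin sp'.

Lemma LL1E v : LL1 v = LL0 v + F v.
Proof.
by rewrite /LL /F /E /dl scalerBl; exact: zm1.
Qed.
Lemma F_lin : is_linear_map +%R *:%R F.
Proof.
have -> : F = fun x => LL1 x - LL0 x.
  by apply/funext => x; rewrite LL1E addrC addKr.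
exact: lin_sub (LL_lin sp') (LL_lin sp).
Qed.

Lemma P'LL1 z : P' (LL1 z) = 0.
Proof. exact: PLL sp' z. Qed.

Lemma J1 x : P' (x - P x) = - P' (F (S x)).
Proof.
by rewrite -(LLS sp) -[LL0 _](addrK (F (S x))) -LL1E (linB lP') P'LL1 sub0r.
Qed.
Lemma J2 x : P x - P' (P x) = S' (F (P x)).
Proof.
by rewrite -(S_LL sp') LL1E (LLP sp) add0r.
Qed.
Lemma J3 x : P' x - P x = - P' (F (S x)) - S' (F (P x)).
Proof.
by rewrite -J1 -J2 (linB lP') ABCD subrr subr0.
Qed.
Lemma J4 x : S' x - S x = - S' (F (S x)) + S' (P x) - P' (S x).
Proof.
have e1 : S' x = S' (P x) + S' (LL0 (S x)).
  by rewrite (LLS sp) -(linD lS') addrC subrK.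
have e2 : S' (LL0 (S x)) = S x - P' (S x) - S' (F (S x)).
  by rewrite -[LL0 _](addrK (F (S x))) -LL1E (linB lS') (S_LL sp').
by rewrite e1 e2 zm4.
Qed.
Lemma J5 x : S' (P x) = S' (S' (F (P x))).
Proof. by rewrite -J2 (linB lS') (SP sp') subr0. Qed.
Lemma J6 x : P' (S x) = - P' (F (S (S x))).
Proof. by rewrite -J1 (PS sp) subr0. Qed.
Lemma J7 : P' (E u) = dl *: P' u.
Proof.
by rewrite /PP /E (linfB lphi') (sp_phiL sp') (sp_u sp) (linfZ lphi') -mulrBl scalerA.
Qed.
Lemma J8 x : phi' x = phi x * phi' u - phi' (F (S x + P x)).
Proof.
set z := S x + P x.
have ex : x = LL0 z + P z.
  rewrite /z (linD (LL_lin sp)) (linD lP) (LLS sp) (LLP sp) (PS sp) (PPP sp).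
  by rewrite addr0 add0r subrK.
have e1 : phi' (LL0 z) = - phi' (F z).
  by rewrite -[LL0 z](addrK (F z)) -LL1E (linfB lphi') (phiLL sp') sub0r.
have e2 : phi z = phi x.
  by rewrite /z (linfD lphi) (phiS sp) add0r /PP (linfZ lphi) (sp_phiu sp) mulr1.
have e3 : phi' (P z) = phi x * phi' u by rewrite /PP (linfZ lphi') e2.
by rewrite {1}ex (linfD lphi') e1 e3 addrC.
Qed.

Let g := opnorm S.
Let t := opnorm P.
Let g' := opnorm S'.
Let t' := opnorm P'.
Let h := opnorm (opsub L' L).
Let d := nK dl.
Let a := opnorm (opsub P' P).
Let Ff := formnorm phi'.

Let bS := S_bounded sp.
Let bS' := S_bounded sp'.
Let bP := P_bounded sp.
Let bP' := P_bounded sp'.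
Let bE : bounded_op (opsub L' L) := bounded_sub (sp_L sp') (sp_L sp).
Let bPd : bounded_op (opsub P' P) := bounded_sub bP' bP.

Lemma g_ge0 : 0 <= g. Proof. exact: opnorm_ge0. Qed.
Lemma t_ge0 : 0 <= t. Proof. exact: opnorm_ge0. Qed.
Lemma g'_ge0 : 0 <= g'. Proof. exact: opnorm_ge0. Qed.
Lemma t'_ge0 : 0 <= t'. Proof. exact: opnorm_ge0. Qed.
Lemma h_ge0 : 0 <= h. Proof. exact: opnorm_ge0. Qed.
Lemma a_ge0 : 0 <= a. Proof. exact: opnorm_ge0. Qed.
Lemma d_ge0 : 0 <= d. Proof. exact: nK_ge0. Qed.

Lemma nE v : nX (E v) <= h * nX v.
Proof. exact: (op_bnd bE). Qed.
Lemma nF v : nX (F v) <= (h + d) * nX v.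
Proof.
rewrite /F mulrDl; apply: le_trans (nXD _ _) _; rewrite nXN nXZ lerD //; exact: nE.
Qed.

Lemma Ba x : nX (P' x - P x) <= (t' * h * g + d * a * g + (g' * h * t + d * g' * a)) * nX x.
Proof.
have e : P' x - P x = - (P' (E (S x)) - dl *: (P' (S x) - P (S x)))
        - (S' (E (P x)) - dl *: (- S' (P' x - P x))).
  rewrite [LHS]J3 /F [in LHS](linB lP') [in LHS](linZ lP') [in LHS](linB lS') [in LHS](linZ lS').
  rewrite (PS sp) subr0.
  by rewrite (linB lS' (P' x) (P x)) (SP sp') sub0r opprK.
rewrite e -opprD nXN; apply: le_trans (nX_tri4' _ _ _ _ _) _.
rewrite !mulrDl; apply: lerD; apply: lerD.
- exact: (op_bnd3 bP' bE bS).
- rewrite -!mulrA ler_wpM2l ?d_ge0 // mulrA; exact: (op_bnd2 bPd bS).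
- exact: (op_bnd3 bS' bE bP).
- rewrite -!mulrA ler_wpM2l ?d_ge0 // mulrA nXN; exact: (op_bnd2 bS' bPd).
Qed.

Lemma Bs x : nX (S' x - S x) <=
  (g' * h * g + d * (g' * g) + (g' * g' * h * t + d * (g' * g' * a))
   + (t' * h * g * g + d * (a * g * g))) * nX x.
Proof.
have e : S' x - S x = - (S' (E (S x)) - dl *: S' (S x))
   + (S' (S' (E (P x))) - dl *: (- S' (S' (P' x - P x))))
   + (P' (E (S (S x))) - dl *: (P' (S (S x)) - P (S (S x)))).
  have c1 : S' (F (S x)) = S' (E (S x)) - dl *: S' (S x).
    by rewrite /F (linB lS' (E (S x))) (linZ lS').
  have c2' : S' (P x) = - S' (P' x - P x).
    by rewrite (linB lS' (P' x)) (SP sp') sub0r opprK.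
  have c2 : S' (S' (F (P x))) = S' (S' (E (P x))) - dl *: (- S' (S' (P' x - P x))).
    rewrite /F (linB lS' (E (P x)) (dl *: P x)) (linZ lS' dl (P x)) c2'.
    by rewrite (linB lS' (S' (E (P x)))) (linZ lS') (linN lS').
  have c3 : P' (F (S (S x))) = P' (E (S (S x))) - dl *: (P' (S (S x)) - P (S (S x))).
    by rewrite /F (linB lP' (E (S (S x)))) (linZ lP') (PS sp) subr0.
  by rewrite [LHS]J4 J5 J6 opprK c1 c2 c3.
rewrite e; apply: le_trans (nX_tri6 _ _ _ _ _ _ _) _.
rewrite !mulrDl; apply: lerD; [apply: lerD|].
- apply: lerD; first exact: (op_bnd3 bS' bE bS).
  rewrite -!mulrA ler_wpM2l ?d_ge0 // mulrA; exact: (op_bnd2 bS' bS).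
- apply: lerD; first exact: (op_bnd4 bS' bS' bE bP).
  rewrite -!mulrA ler_wpM2l ?d_ge0 // !mulrA nXN; exact: (op_bnd3 bS' bS' bPd).
- apply: lerD; first exact: (op_bnd4 bP' bE bS bS).
  rewrite -!mulrA ler_wpM2l ?d_ge0 // !mulrA; exact: (op_bnd3 bPd bS bS).
Qed.

Lemma Pu : P u = u.
Proof. by rewrite /PP (sp_phiu sp) scale1r. Qed.

Lemma Bd : d * (1 - a) <= t' * h.
Proof.
have hu := nXu_gt0 sp.
rewrite -(ler_pM2r hu).
have e1 : nX (P' (E u)) = d * nX (P' u) by rewrite J7 nXZ.
have e2 : nX u - a * nX u <= nX (P' u).
  have h1 : nX (P' u - P u) <= a * nX u := op_bnd bPd u.
  rewrite Pu in h1.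
  have e3 : u - (u - P' u) = P' u by rewrite opprB [u + _]addrC subrK.
  have := nXBle u (u - P' u); rewrite e3 => h2.
  move: h1; rewrite nXB => h1; lra.
apply: le_trans (_ : d * nX (P' u) <= _).
  have -> : d * (1 - a) * nX u = d * (nX u - a * nX u) by ring.
  by rewrite ler_wpM2l ?d_ge0.
rewrite -e1; exact: (op_bnd2 bP' bE).
Qed.

Let w := nX (u - u').

Lemma phi'u_up : nK (phi' u) <= 1 + Ff * w.
Proof.
have -> : phi' u = 1 + phi' (u - u') by rewrite (linfB lphi') (sp_phiu sp') addrC subrK.
apply: le_trans (nKD _ _) _; rewrite nK1 lerD2l; exact: (form_bnd (sp_phi sp')).
Qed.
Lemma phi'u_lo : 1 - Ff * w <= nK (phi' u).
Proof.
have e : phi' u = 1 + phi' (u - u') by rewrite (linfB lphi') (sp_phiu sp') addrC subrK.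
have h1 := form_bnd (sp_phi sp') (u - u').
have h2 : nK 1 <= nK (phi' u) + nK (phi' (u - u')).
  have e' : (1 : K) = phi' u - phi' (u - u') by rewrite e addrK.
  by rewrite {1}e'; apply: le_trans (nKD _ _) _; rewrite nKN.
rewrite nK1 in h2; rewrite -/w -/Ff in h1; lra.
Qed.

Lemma BF : Ff * nX u <= t * (1 + Ff * w) + Ff * (h + d) * (g + t) * nX u.
Proof.
have hu := nXu_gt0 sp.
have Ff0 : 0 <= Ff := formnorm_ge0 (sp_phi sp').
set c := t * (1 + Ff * w) + Ff * (h + d) * (g + t) * nX u.
have c0 : 0 <= c.
  have := t_ge0; have := g_ge0; have := h_ge0; have := d_ge0; have := nX_ge0 (u - u').
  rewrite /c -/w => *; have := nX_ge0 u.
  by move=> *; apply: addr_ge0; [apply: mulr_ge0 => //; apply: addr_ge0 => //; apply: mulr_ge0|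
    apply: mulr_ge0 => //; apply: mulr_ge0 => //; [apply: mulr_ge0 => //; apply: addr_ge0|apply: addr_ge0]].
have key : Ff <= c / nX u.
  apply: formnorm_le; first by apply: divr_ge0 => //; exact: nX_ge0.
  move=> x; rewrite -(ler_pM2r hu) mulrAC divfK ?gt_eqF //.
  set z := S x + P x.
  have hz : nX z <= (g + t) * nX x.
    rewrite mulrDl; apply: le_trans (nXD _ _) _; apply: lerD; exact: op_bnd.
  have hFz : nK (phi' (F z)) <= Ff * (h + d) * (g + t) * nX x.
    apply: le_trans (form_bnd (sp_phi sp') _) _.
    rewrite -!mulrA ler_wpM2l // mulrA; apply: le_trans (nF _) _.
    by rewrite -mulrA ler_wpM2l // addr_ge0 ?h_ge0 ?d_ge0.
  have h1 : nK (phi' x) <= nK (phi x) * nK (phi' u) + nK (phi' (F z)).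
    by rewrite J8 -nKM; apply: le_trans (nKD _ _) _; rewrite nKN.
  have h2 := phi_bnd sp x.
  have h3 := phi'u_up.
  have h4 : nK (phi x) * nK (phi' u) * nX u <= t * nX x * (1 + Ff * w).
    rewrite mulrAC; apply: ler_pM => //.
      by apply: mulr_ge0; [apply: nK_ge0|apply: nX_ge0].
    exact: nK_ge0.
  rewrite /c; have := nX_ge0 x; nra.
rewrite ler_pdivlMr // in key.
Qed.
Lemma Bt' : t' <= Ff * nX u'.
Proof.
have Ff0 : 0 <= Ff := formnorm_ge0 (sp_phi sp').
apply: opnorm_le; first by apply: mulr_ge0 => //; apply: nX_ge0.
move=> x; rewrite /PP nXZ mulrAC ler_wpM2r ?nX_ge0 //.
exact: (form_bnd (sp_phi sp')).
Qed.

Lemma Bg1 x : nX (S' x) <= (g + t) * ((1 + t') * nX x + (h + d) * nX (S' x)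
                                   + nK (phi (S' x)) * nX u).
Proof.
set y := S' x.
have ey := SPinv sp y.
set v := LL0 y + P y.
have hv : v = (x - P' x) - F y + phi y *: u.
  by rewrite /v -(LLS sp') -/y LL1E addrK.
have h1 : nX y <= (g + t) * nX v.
  rewrite -{1}ey mulrDl; apply: le_trans (nXD _ _) _; apply: lerD; exact: op_bnd.
apply: le_trans h1 _; rewrite ler_wpM2l ?addr_ge0 ?g_ge0 ?t_ge0 //.
rewrite hv; apply: le_trans (nXD _ _) _; rewrite nXZ lerD2r.
apply: le_trans (nXD _ _) _; rewrite nXN; apply: lerD; last exact: nF.
apply: le_trans (nXD _ _) _; rewrite nXN mulrDl mul1r lerD2l; exact: op_bnd.
Qed.

Lemma Bg2 x : nK (phi (S' x)) * nK (phi' u) <= Ff * (h + d) * (g + t) * nX (S' x).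
Proof.
set y := S' x.
have Ff0 : 0 <= Ff := formnorm_ge0 (sp_phi sp').
have e : phi y * phi' u = phi' (F (S y + P y)).
  by have := J8 y; rewrite (phiS sp') => /eqP; rewrite eq_sym subr_eq0 => /eqP.
rewrite -nKM e; apply: le_trans (form_bnd (sp_phi sp') _) _.
rewrite -!mulrA ler_wpM2l // mulrA; apply: le_trans (nF _) _.
rewrite -mulrA ler_wpM2l ?addr_ge0 ?h_ge0 ?d_ge0 //.
rewrite mulrDl; apply: le_trans (nXD _ _) _; apply: lerD; exact: op_bnd.
Qed.

Lemma apriori :
  4 * t * w <= nX u -> (g + t) * (h + d) * (1 + 4 * t * (g + t)) <= 1 / 4 ->
  [/\ Ff * nX u <= 2 * t, t' <= 3 * t & g' <= 2 * (g + t) * (1 + 3 * t)].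
Proof.
move=> C1 C3.
have hu := nXu_gt0 sp.
have t1 := tau_ge1 sp; rewrite -/t in t1.
have Ff0 : 0 <= Ff := formnorm_ge0 (sp_phi sp').
have w0 : 0 <= w := nX_ge0 _.
have g0 := g_ge0; have h0 := h_ge0; have d0 := d_ge0.
have C2 : (h + d) * (g + t) <= 1 / 4.
  apply: le_trans C3; rewrite mulrC -{1}[_ * _]mulr1; apply: ler_wpM2l.
  - by apply: mulr_ge0; lra.
  - have : 0 <= 4 * t * (g + t) by apply: mulr_ge0; [apply: mulr_ge0|]; lra.
    lra.
have hF : Ff * nX u <= 2 * t.
  have := BF.
  have e1 : t * (Ff * w) * 4 <= Ff * nX u.
    have := ler_wpM2l Ff0 C1; rewrite !mulrA; nra.
  have e2 : Ff * (h + d) * (g + t) * nX u <= Ff * nX u / 4.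
    have := mulr_ge0 Ff0 (ltW hu); nra.
  nra.
have hw : Ff * w <= 1 / 2.
  have k1 : Ff * nX u * (4 * t * w) <= Ff * nX u * nX u.
    by apply: ler_wpM2l => //; exact: mulr_ge0 Ff0 (ltW hu).
  have k2 : Ff * nX u * nX u <= 2 * t * nX u by apply: ler_wpM2r => //; exact: ltW hu.
  have k3 : (Ff * w) * (4 * t * nX u) <= (1/2) * (4 * t * nX u) by nra.
  have k4 : 0 < 4 * t * nX u by apply: mulr_gt0 => //; lra.
  by rewrite ler_pM2r in k3.
have ht' : t' <= 3 * t.
  apply: le_trans Bt' _.
  have : nX u' <= nX u + w.
    by rewrite /w nXB; have := nXD u (u' - u); rewrite addrC subrK.
  nra.
split => //.
apply: opnorm_le.
  by apply: mulr_ge0; [apply: mulr_ge0 => //; lra | lra].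
move=> x.
have i1 := Bg1 x; have i2 := Bg2 x; have i3 := phi'u_lo.
have p1 : nK (phi (S' x)) <= 2 * Ff * (h + d) * (g + t) * nX (S' x).
  have : nK (phi (S' x)) * (1 / 2) <= nK (phi (S' x)) * nK (phi' u).
    rewrite ler_wpM2l ?nK_ge0 //; lra.
  have := nK_ge0 (phi (S' x)); nra.
set y := S' x in i1 i2 p1 *.
have y0 : 0 <= nX y := nX_ge0 _.
have x0 : 0 <= nX x := nX_ge0 _.
have gt0 : 0 <= g + t by lra.
have hd0 : 0 <= h + d by lra.
have q1 : nK (phi y) * nX u <= 4 * t * (h + d) * (g + t) * nX y.
  have r1 : nK (phi y) * nX u <= 2 * Ff * (h + d) * (g + t) * nX y * nX u.
    by apply: ler_wpM2r => //; exact: ltW.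
  have r2 : 0 <= (h + d) * (g + t) * nX y by apply: mulr_ge0 => //; apply: mulr_ge0.
  have r3 : Ff * nX u * ((h + d) * (g + t) * nX y) <= 2 * t * ((h + d) * (g + t) * nX y).
    by apply: ler_wpM2r.
  nra.
have q2 : (g + t) * (1 + t') * nX x <= (g + t) * (1 + 3 * t) * nX x.
  by apply: ler_wpM2r => //; apply: ler_wpM2l => //; lra.
have q3 : (g + t) * (h + d) * (1 + 4 * t * (g + t)) * nX y <= 1 / 4 * nX y.
  by apply: ler_wpM2r.
have q4 : nX y <= (g + t) * (1 + t') * nX x + (g + t) * (h + d) * (1 + 4 * t * (g + t)) * nX y.
  apply: le_trans i1 _.
  have q5 : (g + t) * (nK (phi y) * nX u) <= (g + t) * (4 * t * (h + d) * (g + t) * nX y).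
    by apply: ler_wpM2l.
  nra.
nra.
Qed.
End Pert.

Section Arith.
Variable R : realType.
Implicit Types x y X Y h : R.

Definition le1 h x (x0 : R) X := [/\ 0 <= x, 0 <= x0, 0 <= X & x <= x0 + X * h].

Lemma le1_mul h x y (x0 y0 : R) X Y : 0 <= h <= 1 ->
  le1 h x x0 X -> le1 h y y0 Y -> le1 h (x * y) (x0 * y0) (x0 * Y + X * y0 + X * Y).
Proof.
move=> /andP[h0 h1] [x0' hx0 hX hx] [y0' hy0 hY hy].
split; try by repeat first [apply: addr_ge0 | apply: mulr_ge0].
have e1 : x * y <= (x0 + X * h) * (y0 + Y * h) by apply: ler_pM.
apply: le_trans e1 _.
have k : h * h <= h by nra.
have : X * Y * (h * h) <= X * Y * h.
  by apply: ler_wpM2l => //; exact: mulr_ge0.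
nra.
Qed.
Lemma le1_add h x y (x0 y0 : R) X Y : le1 h x x0 X -> le1 h y y0 Y -> le1 h (x + y) (x0 + y0) (X + Y).
Proof. move=> [? ? ? ?] [? ? ? ?]; split; try exact: addr_ge0; lra. Qed.
Lemma le1_le h x y (x0 : R) X : 0 <= x -> x <= y -> le1 h y x0 X -> le1 h x x0 X.
Proof. move=> ? ? [? ? ? ?]; split => //; lra. Qed.
Lemma le1_cst h x (x0 : R) : 0 <= x -> x <= x0 -> le1 h x x0 0.
Proof. move=> ? ?; split => //; rewrite ?mul0r ?addr0 //; lra. Qed.

Lemma final_arith (g t A S K : R) : 0 <= g -> 0 <= t -> 0 <= A -> 0 <= S -> 0 <= K ->
  exists M, 0 <= M /\ forall h t' g' ah sh dh,
   0 <= h <= 1 -> 0 <= t' -> 0 <= g' -> 0 <= ah -> 0 <= sh -> 0 <= dh ->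
   t' <= t + ah * h -> g' <= g + sh * h -> ah <= A -> sh <= S -> dh <= K ->
   ah <= t' * g + g' * t + dh * h * ah * (g + g') ->
   sh <= g' * g + dh * g' * g + g' * g' * t + dh * h * g' * g' * ah + t' * g * g
         + dh * h * ah * g * g ->
   dh <= t' + dh * (ah * h) ->
   g' * ah + t * sh <= 3 * g * g * t + 3 * g * g * t * t + M * h.
Proof.
move=> g0 t0 A0 S0 K0; eexists; split; last first.
move=> h t' g' ah sh dh hh t'0 g'0 ah0 sh0 dh0 Ht Hg HA HS HK H1 H2 H3.
have h0 : 0 <= h by case/andP: hh.
have lt' : le1 h t' t A.
  split => //; apply: le_trans Ht _; rewrite lerD2l ler_wpM2r //.
have lg' : le1 h g' g S.
  split => //; apply: le_trans Hg _; rewrite lerD2l ler_wpM2r //.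
have ldhh : le1 h (dh * h) 0 K by split; rewrite ?lexx ?add0r ?ler_wpM2r ?mulr_ge0.
have lA : le1 h ah A 0 := le1_cst h ah0 HA.
have lK : le1 h dh K 0 := le1_cst h dh0 HK.
have lahh : le1 h (ah * h) 0 A by split; rewrite ?lexx ?add0r ?ler_wpM2r ?mulr_ge0.
have cg : le1 h g g 0 := le1_cst h g0 (lexx g).
have ct : le1 h t t 0 := le1_cst h t0 (lexx t).
have m1 := le1_mul hh lt' cg.
have m2 := le1_mul hh lg' ct.
have m3 := le1_mul hh (le1_mul hh ldhh lA) (le1_add cg lg').
have lah := le1_le ah0 H1 (le1_add (le1_add m1 m2) m3).
have m4 := le1_mul hh lK lahh.
have ldh := le1_le dh0 H3 (le1_add lt' m4).
have n1 := le1_mul hh lg' cg.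
have n2 := le1_mul hh (le1_mul hh ldh lg') cg.
have n3 := le1_mul hh (le1_mul hh lg' lg') ct.
have n4 := le1_mul hh (le1_mul hh (le1_mul hh ldhh lg') lg') lA.
have n5 := le1_mul hh (le1_mul hh lt' cg) cg.
have n6 := le1_mul hh (le1_mul hh (le1_mul hh ldhh lA) cg) cg.
have lsh := le1_le sh0 H2 (le1_add (le1_add (le1_add (le1_add (le1_add n1 n2) n3) n4) n5) n6).
have lfin := le1_add (le1_mul hh lg' lah) (le1_mul hh ct lsh).
case: lfin => _ _ _ hle; apply: le_trans hle _.
apply: lerD; last exact: lexx.
rewrite le_eqVlt; apply/orP; left; apply/eqP; ring.
by repeat first [apply: addr_ge0 | apply: mulr_ge0 | exact: lexx].
Qed.

Lemma apriori_arith (g t T G K h t' g' ah sh dh : R) :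
  0 <= g -> 0 <= t -> 0 <= T -> 0 <= G -> 0 <= K -> 0 <= h <= 1 ->
  0 <= t' -> 0 <= g' -> 0 <= ah -> 0 <= sh -> 0 <= dh ->
  t' <= T -> g' <= G -> dh <= K -> dh * h * (g + G) <= 1 / 2 ->
   ah <= t' * g + g' * t + dh * h * ah * (g + g') ->
   sh <= g' * g + dh * g' * g + g' * g' * t + dh * h * g' * g' * ah + t' * g * g
         + dh * h * ah * g * g ->
  ah <= 2 * (T * g + G * t) /\
  sh <= G * g + K * G * g + G * G * t + K * G * G * (2 * (T * g + G * t))
        + T * g * g + K * (2 * (T * g + G * t)) * g * g.
Proof.
move=> g0 t0 T0 G0 K0 hh t'0 g'0 ah0 sh0 dh0 hT hG hK hd H1 H2.
have h0 : 0 <= h by case/andP: hh.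
have h1 : h <= 1 by case/andP: hh.
have z1 : 0 <= (0 : R) <= 1 by rewrite lexx ler01.
have hA : ah <= 2 * (T * g + G * t).
  have k1 : t' * g <= T * g by apply: ler_wpM2r.
  have k2 : g' * t <= G * t by apply: ler_wpM2r.
  have k3 : dh * h * ah * (g + g') <= ah * (1 / 2).
    have : dh * h * (g + g') <= dh * h * (g + G).
      have hp : 0 <= dh * h by exact: mulr_ge0.
      by rewrite ler_wpM2l // lerD2l.
    move=> k; have k' : dh * h * (g + g') <= 1 / 2 by lra.
    have := ler_wpM2l ah0 k'; lra.
  lra.
split => //.
have lg := le1_cst 0 g'0 hG.
have lt := le1_cst 0 t'0 hT.
have ld := le1_cst 0 dh0 hK.
have ldh : le1 0 (dh * h) K 0.
  apply: le1_cst; first exact: mulr_ge0.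
  by rewrite -[K]mulr1; apply: ler_pM.
have la := le1_cst 0 ah0 hA.
have cg := le1_cst 0 g0 (lexx g).
have ct := le1_cst 0 t0 (lexx t).
have n1 := le1_mul z1 lg cg.
have n2 := le1_mul z1 (le1_mul z1 ld lg) cg.
have n3 := le1_mul z1 (le1_mul z1 lg lg) ct.
have n4 := le1_mul z1 (le1_mul z1 (le1_mul z1 ldh lg) lg) la.
have n5 := le1_mul z1 (le1_mul z1 lt cg) cg.
have n6 := le1_mul z1 (le1_mul z1 (le1_mul z1 ldh la) cg) cg.
have lsh := le1_le sh0 H2 (le1_add (le1_add (le1_add (le1_add (le1_add n1 n2) n3) n4) n5) n6).
case: lsh => _ _ _; rewrite mulr0 addr0 => hle; apply: le_trans hle _.
rewrite le_eqVlt; apply/orP; left; apply/eqP; ring.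
Qed.
End Arith.

Section Anal.
Variables (R : realType) (b : bool) (X : completeNormedModType (scal R b)).
Local Notation K := (scal R b).

Lemma analytic_lip (Y : zmodType) (scaleY : K -> Y -> Y) (nY : Y -> R)
  (V : set (X -> X)) (f : (X -> X) -> Y) (L : X -> X) :
  (forall y, scaleY (-1) y = - y) ->
  (forall y z, nY (y + z) <= nY y + nY z) -> (forall y, nY (- y) = nY y) ->
  (forall y, 0 <= nY y) -> (forall y, nY y <= 0 -> y = 0) -> nY 0 = 0 ->
  analytic_on 0 +%R scaleY nY V f -> V L ->
  exists K0 r0, 0 < r0 /\ 0 <= K0 /\ forall H, bounded_op H -> opnorm H < r0 ->
     nY (f (opadd L H) - f L) <= K0 * opnorm H.
Proof.
move=> hsc htri hN h0 h00 nY0 han VL.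
have [r [A [C [r0 [hdep hlin hbnd [M hM] hexp]]]]] := han L VL.
have zb := @bounded_zero R b X.
have Ak0 : forall k, (0 < k)%N -> A k (fun _ => fun _ : X => 0) = 0.
  case=> // k _; apply: h00.
  have [C0 hC] := hbnd k.+1 (fun _ => fun _ : X => 0) (fun _ => zb).
  apply: le_trans hC _.
  by rewrite big_ord_recl opnorm_zero mul0r mulr0.
have nsum : forall n (F : 'I_n -> Y), nY (\sum_(k < n) F k) <= \sum_(k < n) nY (F k).
  move=> n F; apply: (big_ind2 (fun y r => nY y <= r)); first by rewrite nY0.
    by move=> y1 r1 y2 r2 e1 e2; apply: le_trans (htri _ _) _; apply: lerD.
  by move=> i _.
have fL : f L = A 0%N (fun _ => fun _ : X => 0).
  have e0 : opadd L (fun _ => 0) = L by apply/funext => x; rewrite /opadd addr0.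
  have : forall e : R, 0 < e -> nY (f L - A 0%N (fun _ => fun _ : X => 0)) <= e.
    move=> e e0'; have [N hN'] := hexp (fun _ => 0) zb ltac:(by rewrite opnorm_zero) e e0'.
    have := hN' N.+1 (leqnSn N); rewrite e0 big_ord_recl big1 ?addr0; last first.
      by move=> i _; apply: Ak0.
    by rewrite hsc => /ltW.
  move=> hall; apply/eqP; rewrite -subr_eq0; apply/eqP; apply: h00.
  apply/ler_addgt0Pr => e e0'; rewrite add0r; exact: hall.
have M0 : 0 <= M by have := hM 0%N; rewrite big_ord0.
exists (M / r), r; split => //; split; first by apply: divr_ge0 => //; exact: ltW.
move=> H bH hr.
set h := opnorm H.
have hge0 : 0 <= h := opnorm_ge0 bH.
have C0 : forall k, 0 <= C k by move=> k; have [] := hbnd k (fun _ => H) (fun _ => bH).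
apply/ler_addgt0Pr => e e0.
have [N hN'] := hexp H bH hr e e0.
have := hN' N.+1 (leqnSn N); rewrite big_ord_recl hsc.
rewrite (hdep 0%N (fun _ => H) (fun _ => fun _ : X => 0)) // -fL.
set Sg := \sum_(i < N) _.
move=> hlt.
have e1 : f (opadd L H) - f L = (f (opadd L H) - (f L + Sg)) + Sg.
  by rewrite opprD addrA subrK.
rewrite e1; apply: le_trans (htri _ _) _; rewrite addrC lerD //; last exact: ltW.
apply: le_trans (nsum _ _) _.
have e2 : forall i : 'I_N, nY (A (bump 0 i) (fun _ => H)) <= h / r * (C (bump 0 i) * r ^+ (bump 0 i)).
  move=> i; have [_ hb] := hbnd (bump 0 i) (fun _ => H) (fun _ => bH).
  apply: le_trans hb _; rewrite prodr_const card_ord.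
  rewrite mulrCA ler_wpM2l // /bump /= add1n exprS exprS.
  rewrite mulrA divfK ?gt_eqF //.
  by apply: ler_wpM2l => //; apply: lerXn2r => //; [exact: ltW | exact: ltW].
apply: le_trans (ler_sum _ (fun i _ => e2 i)) _.
rewrite -mulr_sumr.
have hs : \sum_(i < N) C (bump 0 i) * r ^+ bump 0 i <= M.
  apply: le_trans (hM N.+1); rewrite big_ord_recl expr0 mulr1 lerDr; exact: C0.
have hr0 : 0 <= h / r by apply: divr_ge0 => //; exact: ltW.
apply: le_trans (ler_wpM2l hr0 hs) _.
rewrite le_eqVlt; apply/orP; left; apply/eqP; ring.
Qed.
End Anal.

Lemma md_le (R : realType) (b : bool) (X : completeNormedModType (scal R b))
  (f : (X -> X) -> R) (L : X -> X) (c : R) :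
  (forall e : R, 0 < e -> exists r : R, 0 < r /\ forall L', bounded_op L' ->
      0 < opnorm (opsub L L') < r -> `|f L - f L'| <= (c + e) * opnorm (opsub L L')) ->
  (metric_deriv f L <= c%:E)%E.
Proof.
move=> H; apply/lee_addgt0Pr => e e0.
have [r [r0 hr]] := H e e0.
rewrite /metric_deriv; apply: le_trans; first by apply: ereal_inf_lbound; exists r.
apply: ge_ereal_sup => _ [L' [bL' hL'] <-].
rewrite -EFinD lee_fin.
have hp : 0 < opnorm (opsub L L') by case/andP: hL'.
by rewrite ler_pdivrMr //; exact: hr.
Qed.

Lemma opnorm_tri (R : realType) (b : bool) (X : completeNormedModType (scal R b))
  (T T' : X -> X) : bounded_op T -> bounded_op T' ->
  opnorm T' <= opnorm T + opnorm (opsub T' T).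
Proof.
move=> bT bT'; apply: opnorm_le.
  by apply: addr_ge0; apply: opnorm_ge0 => //; exact: bounded_sub.
move=> x; have := op_bnd bT x; have := op_bnd (bounded_sub bT' bT) x.
rewrite /opsub mulrDl => h1 h2.
have := nXD (T x) (T' x - T x); rewrite addrC subrK; lra.
Qed.

Unset Implicit Arguments.
Theorem corollary5p3 (R : realType) (b : bool) (X : completeNormedModType (scal R b))
  (L0 : X -> X) (lam0 : scal R b) (V : set (X -> X))
  (lam : (X -> X) -> scal R b) (u : (X -> X) -> X) (phi : (X -> X) -> X -> scal R b) :
  bounded_op L0 ->
  simple_isolated_eigenvalue L0 lam0 ->
  open_in_BX V -> V L0 ->
  analytic_on 0 +%R *%R (@nK R b) V lam ->
  analytic_on 0 +%R *:%R (@nX R b X) V u ->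
  analytic_on (fun _ => 0) (fun f g x => f x + g x) (fun a f x => a * f x)
              (@formnorm R b X) V phi ->
  lam L0 = lam0 ->
  (forall L, V L ->
     simple_isolated_eigenvalue L (lam L) /\
     [/\ u L != 0, L (u L) = lam L *: u L,
         bounded_form (phi L),
         (forall x, phi L (L x) = lam L * phi L x) &
         phi L (u L) = 1]) ->
  forall L, V L ->
    (metric_deriv
       (fun L' => (opnorm (S_of L' (lam L') (u L') (phi L')) *
                   opnorm (P_of (u L') (phi L')))%R) L
     <= (6 * (opnorm (S_of L (lam L) (u L) (phi L))) ^+ 2 *
             (opnorm (P_of (u L) (phi L))) ^+ 2)%R%:E)%E.
Proof.
move=> _ _ Vop _ anlam anu _ _ hsp L VL.
have [bL [rV [rV0 hV]]] := Vop L VL.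
have spec' : forall L', V L' -> spec L' (lam L') (u L') (phi L') (S_of L' (lam L') (u L') (phi L')).
  move=> L' VL'; have [sie [_ Lu bphi phiL phiu]] := hsp L' VL'.
  exact: spec_of (Vop L' VL').1 sie Lu bphi phiL phiu.
have sp := spec' L VL.
have [Kl [rl [rl0 [Kl0 hl]]]] := @analytic_lip R b X (scal R b) *%R (@nK R b) V lam L
  (fun y => mulN1r y) (@nKD R b) (@nKN R b) (@nK_ge0 R b)
  (fun y hy => nK_eq0 (le_anti (introT andP (conj hy (nK_ge0 y))))) (@nK0 R b) anlam VL.
have [Ku [ru [ru0 [Ku0 hu]]]] := @analytic_lip R b X X *:%R (@nX R b X) V u L
  (fun y => scaleN1r y) (@nXD R b X) (@nXN R b X) (@nX_ge0 R b X)
  (fun y hy => nX_eq0 (le_anti (introT andP (conj hy (nX_ge0 y))))) (@nX0 R b X) anu VL.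
set g := opnorm (S_of L (lam L) (u L) (phi L)).
set t := opnorm (PP (u L) (phi L)).
change (opnorm (P_of (u L) (phi L))) with t.
have g0 : 0 <= g := opnorm_ge0 (S_bounded sp).
have t1 : 1 <= t := tau_ge1 sp.
have t0 : 0 <= t by lra.
have hu0 := nXu_gt0 sp.
set T := 3 * t.
set G := 2 * (g + t) * (1 + 3 * t).
set A := 2 * (T * g + G * t).
set Sc := G * g + Kl * G * g + G * G * t + Kl * G * G * A + T * g * g + Kl * A * g * g.
have T0 : 0 <= T by rewrite /T; lra.
have G0 : 0 <= G by rewrite /G; apply: mulr_ge0; [apply: mulr_ge0|]; lra.
have A0 : 0 <= A by rewrite /A; apply: mulr_ge0; [lra|]; apply: addr_ge0; apply: mulr_ge0.
have Sc0 : 0 <= Sc by rewrite /Sc; repeat first [apply: addr_ge0 | apply: mulr_ge0 | assumption].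
have [M [M0 hfin]] := final_arith g0 t0 A0 Sc0 Kl0.
apply: md_le => e e0.
set r5 := nX (u L) / (4 * t * Ku + 1).
set r6 := 1 / (4 * ((g + t) * (1 + Kl) * (1 + 4 * t * (g + t))) + 1).
set r7 := 1 / (2 * Kl * (g + G) + 1).
set r8 := e / (M + 1).
have p5 : 0 < 4 * t * Ku + 1 by have := mulr_ge0 t0 Ku0; lra.
have p6 : 0 < 4 * ((g + t) * (1 + Kl) * (1 + 4 * t * (g + t))) + 1.
  have : 0 <= (g + t) * (1 + Kl) * (1 + 4 * t * (g + t)).
    by repeat first [apply: addr_ge0 | apply: mulr_ge0 | assumption | exact: ler01 | lra].
  lra.
have p7 : 0 < 2 * Kl * (g + G) + 1.
  have : 0 <= Kl * (g + G) by apply: mulr_ge0 => //; lra.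
  lra.
have p8 : 0 < M + 1 by lra.
exists (Num.min rV (Num.min rl (Num.min ru (Num.min 1 (Num.min r5 (Num.min r6 (Num.min r7 r8))))))).
split.
  rewrite !lt_min rV0 rl0 ru0 ltr01 /r5 /r6 /r7 /r8 !divr_gt0 //.
move=> L' bL' /andP[rho0]; rewrite !lt_min opnorm_subC.
move=> /andP[hrV /andP[hrl /andP[hru /andP[h1 /andP[h5 /andP[h6 /andP[h7 h8]]]]]]].
rewrite opnorm_subC in rho0.
set h := opnorm (opsub L' L) in rho0 hrV hrl hru h1 h5 h6 h7 h8 *.
have hle1 : h <= 1 by exact: ltW.
have h0 : 0 <= h by exact: ltW.
have VL' := hV L' bL' hrV.
have sp' := spec' L' VL'.
have bH := bounded_sub bL' bL.
have eL' : opadd L (opsub L' L) = L' by apply/funext => x; rewrite /opadd /opsub addrC subrK.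
have hd := hl _ bH hrl; rewrite eL' -/h in hd.
have hw := hu _ bH hru; rewrite eL' -/h nXB in hw.
set g' := opnorm (S_of L' (lam L') (u L') (phi L')).
set t' := opnorm (PP (u L') (phi L')).
set d := nK (lam L' - lam L) in hd *.
set a := opnorm (opsub (PP (u L') (phi L')) (PP (u L) (phi L))).
set s := opnorm (opsub (S_of L' (lam L') (u L') (phi L')) (S_of L (lam L) (u L) (phi L))).
have d0 : 0 <= d := nK_ge0 _.
have g'0 : 0 <= g' := opnorm_ge0 (S_bounded sp').
have t'0 : 0 <= t' := opnorm_ge0 (P_bounded sp').
have a0 : 0 <= a := opnorm_ge0 (bounded_sub (P_bounded sp') (P_bounded sp)).
have s0 : 0 <= s := opnorm_ge0 (bounded_sub (S_bounded sp') (S_bounded sp)).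
have C1 : 4 * t * nX (u L - u L') <= nX (u L).
  rewrite ltr_pdivlMr // in h5.
  have : 4 * t * nX (u L - u L') <= 4 * t * (Ku * h) by apply: ler_wpM2l => //; lra.
  have := mulr_ge0 (mulr_ge0 t0 Ku0) h0; nra.
have C3 : (g + t) * (h + d) * (1 + 4 * t * (g + t)) <= 1 / 4.
  rewrite ltr_pdivlMr // in h6.
  set Q := (g + t) * (1 + Kl) * (1 + 4 * t * (g + t)) in h6.
  have Q0 : 0 <= Q by rewrite /Q; repeat first [apply: addr_ge0 | apply: mulr_ge0 | assumption | exact: ler01 | lra].
  have W0 : 0 <= (g + t) * (1 + 4 * t * (g + t)).
    apply: mulr_ge0; first lra.
    have := mulr_ge0 t0 (addr_ge0 g0 t0); lra.
  have : (g + t) * (1 + 4 * t * (g + t)) * (h + d) <= (g + t) * (1 + 4 * t * (g + t)) * ((1 + Kl) * h).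
    by apply: ler_wpM2l => //; lra.
  rewrite /Q in h6 *; nra.
have [hF ht' hg'] := apriori sp sp' C1 C3.
rewrite -/g' -/t' -/T in ht'.
rewrite -/g' -/g -/t -/G in hg'.
have dG : d * (g + G) <= 1 / 2.
  rewrite ltr_pdivlMr // in h7.
  have : d * (g + G) <= Kl * h * (g + G) by apply: ler_wpM2r => //; lra.
  have := mulr_ge0 (mulr_ge0 Kl0 h0) (addr_ge0 g0 G0); nra.
have ha : a <= t' * h * g + d * a * g + (g' * h * t + d * g' * a).
  apply: opnorm_le; last exact: (Ba sp sp').
  by repeat first [apply: addr_ge0 | apply: mulr_ge0 | assumption].
have hs : s <= g' * h * g + d * (g' * g) + (g' * g' * h * t + d * (g' * g' * a))
   + (t' * h * g * g + d * (a * g * g)).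
  apply: opnorm_le; last exact: (Bs sp sp').
  by repeat first [apply: addr_ge0 | apply: mulr_ge0 | assumption].
have hdd : d * (1 - a) <= t' * h := Bd sp sp'.
have ht'a : t' <= t + a := opnorm_tri (P_bounded sp) (P_bounded sp').
have htt' : t <= t' + a.
  by rewrite /a opnorm_subC; exact: opnorm_tri (P_bounded sp') (P_bounded sp).
have hg's : g' <= g + s := opnorm_tri (S_bounded sp) (S_bounded sp').
have hgg' : g <= g' + s.
  by rewrite /s opnorm_subC; exact: opnorm_tri (S_bounded sp') (S_bounded sp).
set ah := a / h. set sh := s / h. set dh := d / h.
have hn0 : h != 0 by rewrite gt_eqF.
have ea : a = ah * h by rewrite /ah divfK.
have es : s = sh * h by rewrite /sh divfK.
have ed : d = dh * h by rewrite /dh divfK.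
have ah0 : 0 <= ah by rewrite /ah divr_ge0.
have sh0 : 0 <= sh by rewrite /sh divr_ge0.
have dh0 : 0 <= dh by rewrite /dh divr_ge0.
have H1 : ah <= t' * g + g' * t + dh * h * ah * (g + g').
  rewrite -(ler_pM2r rho0); have ha' := ha; rewrite ea ed in ha'.
  apply: le_trans ha' _; rewrite le_eqVlt; apply/orP; left; apply/eqP; ring.
have H2 : sh <= g' * g + dh * g' * g + g' * g' * t + dh * h * g' * g' * ah + t' * g * g
         + dh * h * ah * g * g.
  rewrite -(ler_pM2r rho0); have hs' := hs; rewrite es ed ea in hs'.
  apply: le_trans hs' _; rewrite le_eqVlt; apply/orP; left; apply/eqP; ring.
have H3 : dh <= t' + dh * (ah * h).
  rewrite -(ler_pM2r rho0); have hdd' := hdd; rewrite ed ea in hdd'.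
  have : dh * h * (1 - ah * h) = dh * h - dh * (ah * h) * h by ring.
  nra.
have hdK : dh <= Kl by rewrite -(ler_pM2r rho0) -ed.
have hdG : dh * h * (g + G) <= 1 / 2 by rewrite -ed.
have hh : 0 <= h <= 1 by rewrite h0 hle1.
have [hA hS] := apriori_arith g0 t0 T0 G0 Kl0 hh t'0 g'0 ah0 sh0 dh0 ht' hg' hdK hdG H1 H2.
have hQ := hfin h t' g' ah sh dh hh t'0 g'0 ah0 sh0 dh0
  ltac:(by rewrite -ea) ltac:(by rewrite -es) hA hS hdK H1 H2 H3.
rewrite /= -/g -/t -/g' -/t'.
have k1 : `|g * t - g' * t'| <= g' * a + t * s.
  have p1 : g' * (t' - t) <= g' * a by apply: ler_wpM2l => //; lra.
  have p2 : g' * (t - t') <= g' * a by apply: ler_wpM2l => //; lra.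
  have p3 : t * (g' - g) <= t * s by apply: ler_wpM2l => //; lra.
  have p4 : t * (g - g') <= t * s by apply: ler_wpM2l => //; lra.
  rewrite ler_norml; apply/andP; split; lra.
have k2 : g' * a + t * s = h * (g' * ah + t * sh) by rewrite ea es; ring.
have k3 : h * (g' * ah + t * sh) <= h * (3 * g * g * t + 3 * g * g * t * t + M * h).
  by apply: ler_wpM2l.
have k4 : 3 * g * g * t + 3 * g * g * t * t <= 6 * g ^+ 2 * t ^+ 2.
  have : g * g * t <= g * g * t * t.
    by rewrite -{1}[g * g * t]mulr1; apply: ler_wpM2l => //; apply: mulr_ge0 => //; apply: mulr_ge0.
  rewrite !expr2; lra.
have k5 : M * h <= e.
  rewrite ltr_pdivlMr // in h8; nra.
have k6 : h * (3 * g * g * t + 3 * g * g * t * t + M * h) <= (6 * g ^+ 2 * t ^+ 2 + e) * h.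
  rewrite mulrC; apply: ler_wpM2r => //; lra.
lra.
Qed.
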